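(* Let $G\ne\{0\}$ be a locally balanced Hausdorff topological vector group over $\mathbb R$ and $d$ a metric on $G$ which is continuous as a map $G\times G\to\mathbb R$. If $G$ is not NSS, then there exists a sequence $(g_n)_{n\in\mathbb N}$ in $G$ such that $$0<\sup_{t\in\mathbb R}d(0,tg_1)<1,\qquad \sup_{t\in\mathbb R}d(0,tg_{n+1})<\tfrac14\sup_{t\in\mathbb R}d(0,tg_n)\quad(n=1,2,\dots).$$
   Context: A topological vector group over $\mathbb R$ is a topological abelian group $(G,+)$ which is also a real vector space (same addition) such that $x\mapsto tx$ is continuous for each $t\in\mathbb R$. A subset $A$ is balanced if $tA\subset A$ for all $|t|\le 1$. $G$ is locally balanced if the balanced neighborhoods of $0$ form a neighborhood base of $0$. $G$ is NSS if some neighborhood of $0$ contains no nontrivial subgroup. *)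

(* Defs.v *)
From Stdlib Require Import Reals.
Open Scope R_scope.

Definition is_topology {X : Type} (op : (X -> Prop) -> Prop) : Prop :=
  op (fun _ => True) /\ op (fun _ => False) /\
  (forall U V, op U -> op V -> op (fun x => U x /\ V x)) /\
  (forall F : (X -> Prop) -> Prop,
      (forall U, F U -> op U) -> op (fun x => exists U, F U /\ U x)).

Definition nbhd {X : Type} (op : (X -> Prop) -> Prop) (x : X) (N : X -> Prop) : Prop :=
  exists U, op U /\ U x /\ (forall y, U y -> N y).

Definition continuous_map {X Y : Type} (opX : (X -> Prop) -> Prop)
  (opY : (Y -> Prop) -> Prop) (f : X -> Y) : Prop :=
  forall V, opY V -> opX (fun x => V (f x)).

Definition prod_open {X Y : Type} (opX : (X -> Prop) -> Prop)
  (opY : (Y -> Prop) -> Prop) (W : X * Y -> Prop) : Prop :=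
  forall p, W p -> exists U V, opX U /\ opY V /\ U (fst p) /\ V (snd p) /\
    (forall a b, U a -> V b -> W (a, b)).

Definition R_open (U : R -> Prop) : Prop :=
  forall x, U x -> exists eps, 0 < eps /\ forall y, Rabs (y - x) < eps -> U y.

Definition hausdorff {X : Type} (op : (X -> Prop) -> Prop) : Prop :=
  forall x y, x <> y -> exists U V, op U /\ op V /\ U x /\ V y /\
    (forall z, U z -> V z -> False).

Definition is_real_vector_space {G : Type} (zero : G) (add : G -> G -> G)
  (opp : G -> G) (smul : R -> G -> G) : Prop :=
  (forall x y z, add x (add y z) = add (add x y) z) /\
  (forall x y, add x y = add y x) /\
  (forall x, add zero x = x) /\
  (forall x, add (opp x) x = zero) /\
  (forall a b x, smul a (smul b x) = smul (a * b) x) /\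
  (forall x, smul 1 x = x) /\
  (forall a x y, smul a (add x y) = add (smul a x) (smul a y)) /\
  (forall a b x, smul (a + b) x = add (smul a x) (smul b x)).

Definition is_top_vector_group {G : Type} (zero : G) (add : G -> G -> G)
  (opp : G -> G) (smul : R -> G -> G) (op : (G -> Prop) -> Prop) : Prop :=
  is_topology op /\
  is_real_vector_space zero add opp smul /\
  continuous_map (prod_open op op) op (fun p => add (fst p) (snd p)) /\
  continuous_map op op opp /\
  (forall t, continuous_map op op (smul t)).

Definition balanced {G : Type} (smul : R -> G -> G) (A : G -> Prop) : Prop :=
  forall t x, Rabs t <= 1 -> A x -> A (smul t x).

Definition locally_balanced {G : Type} (zero : G) (smul : R -> G -> G)
  (op : (G -> Prop) -> Prop) : Prop :=
  forall N, nbhd op zero N ->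
    exists B, nbhd op zero B /\ balanced smul B /\ (forall x, B x -> N x).

Definition is_subgroup {G : Type} (zero : G) (add : G -> G -> G) (opp : G -> G)
  (H : G -> Prop) : Prop :=
  H zero /\ (forall x y, H x -> H y -> H (add x y)) /\ (forall x, H x -> H (opp x)).

Definition NSS {G : Type} (zero : G) (add : G -> G -> G) (opp : G -> G)
  (op : (G -> Prop) -> Prop) : Prop :=
  exists U, nbhd op zero U /\
    forall H, is_subgroup zero add opp H -> (forall x, H x -> U x) ->
      forall x, H x -> x = zero.

Definition is_metric {X : Type} (d : X -> X -> R) : Prop :=
  (forall x y, 0 <= d x y) /\
  (forall x y, d x y = 0 <-> x = y) /\
  (forall x y, d x y = d y x) /\
  (forall x y z, d x z <= d x y + d y z).

Definition ray_dists {G : Type} (zero : G) (smul : R -> G -> G)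
  (d : G -> G -> R) (g : G) : R -> Prop :=
  fun r => exists t : R, r = d zero (smul t g).

(* Main.v *)
Require Import Defs.
From Stdlib Require Import Reals Lra Lia ZArith Classical ClassicalEpsilon.
Open Scope R_scope.

Lemma smul_nat_in (G : Type) (zero : G) (add : G -> G -> G) (opp : G -> G)
  (smul : R -> G -> G) (Hv : is_real_vector_space zero add opp smul)
  (H : G -> Prop) (HH : is_subgroup zero add opp H) x :
  H x -> forall n, H (smul (INR n) x).
Proof.
  destruct Hv as (Hass & Hcom & H0 & Hopp & Hsm & H1 & Hd1 & Hd2).
  destruct HH as (Hz & Ha & _).
  intros Hx n. induction n as [|n IH].
  - simpl.
    assert (E : smul 0 x = zero).
    { assert (E1 : smul 0 x = add (smul 0 x) (smul 0 x)).
      { rewrite <- Hd2. f_equal. ring. }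
      transitivity (add (add (opp (smul 0 x)) (smul 0 x)) (smul 0 x)).
      - rewrite Hopp, H0. reflexivity.
      - rewrite <- Hass, <- E1. apply Hopp. }
    rewrite E; exact Hz.
  - rewrite S_INR, Hd2, H1. apply Ha; assumption.
Qed.

Lemma key (G : Type) (zero : G) (add : G -> G -> G) (opp : G -> G)
  (smul : R -> G -> G) (op : (G -> Prop) -> Prop) (d : G -> G -> R)
  (HG : is_top_vector_group zero add opp smul op)
  (Hlb : locally_balanced zero smul op)
  (Hd : is_metric d)
  (Hdc : continuous_map (prod_open op op) R_open (fun p => d (fst p) (snd p)))
  (HnotNSS : ~ NSS zero add opp op) eps :
  0 < eps -> exists h M, is_lub (ray_dists zero smul d h) M /\ 0 < M /\ M <= eps.
Proof.
  intros Heps.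
  destruct HG as (_ & Hv & _).
  destruct Hd as (Hpos & Hzero & _).
  assert (Nb : nbhd op zero (fun x => d zero x < eps)).
  { assert (Ro : R_open (fun r => r < eps)).
    { intros x Hx. exists (eps - x). split; [lra|].
      intros y Hy. apply Rabs_def2 in Hy. lra. }
    specialize (Hdc _ Ro (zero, zero)). simpl in Hdc.
    destruct Hdc as (U & V & _ & HV & HU0 & HV0 & HUV).
    { assert (d zero zero = 0) by (apply Hzero; reflexivity). lra. }
    exists V. split; [exact HV|]. split; [exact HV0|].
    intros y Hy. exact (HUV zero y HU0 Hy). }
  destruct (Hlb _ Nb) as (B & HB & Hbal & HBN).
  assert (Hex : exists Hs x, is_subgroup zero add opp Hs /\ (forall y, Hs y -> B y)
                 /\ Hs x /\ x <> zero).
  { apply NNPP; intro C. apply HnotNSS. exists B. split; [exact HB|].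
    intros Hs Hsg Hsub x Hx. apply NNPP; intro Hne. apply C.
    exists Hs, x. auto. }
  destruct Hex as (Hs & x & Hsg & Hsub & Hx & Hne).
  assert (Ray : forall t, d zero (smul t x) < eps).
  { intro t. apply HBN.
    destruct (archimed (Rabs t)) as [Ha _].
    set (n := Z.to_nat (up (Rabs t))).
    assert (Hn : Rabs t < INR n + 1).
    { unfold n. destruct (Z_le_gt_dec 0 (up (Rabs t))) as [Hle|Hgt].
      - rewrite INR_IZR_INZ, Z2Nat.id by exact Hle. lra.
      - exfalso. pose proof (Rabs_pos t).
        assert (0 < IZR (up (Rabs t))) by lra. apply lt_IZR in H0. lia. }
    set (m := S n).
    assert (Hm : 0 < INR m) by (apply lt_0_INR; unfold m; lia).
    assert (Hm' : Rabs t < INR m) by (unfold m; rewrite S_INR; lra).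
    pose proof Hv as Hv'. destruct Hv' as (_ & _ & _ & _ & Hsm & _).
    replace (smul t x) with (smul (t / INR m) (smul (INR m) x)).
    2:{ rewrite Hsm. f_equal. field. lra. }
    apply Hbal.
    - unfold Rdiv. rewrite Rabs_mult, Rabs_inv, (Rabs_right (INR m)) by lra.
      apply (Rmult_le_reg_r (INR m)); [lra|].
      rewrite Rmult_assoc, Rinv_l by lra. lra.
    - apply Hsub. eapply smul_nat_in; eauto. }
  destruct Hv as (_ & _ & _ & _ & _ & H1 & _).
  assert (Hb : bound (ray_dists zero smul d x)).
  { exists eps. intros r [t ->]. left. apply Ray. }
  assert (Hne' : exists r, ray_dists zero smul d x r).
  { exists (d zero (smul 1 x)). exists 1. reflexivity. }
  destruct (completeness _ Hb Hne') as [M HM].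
  exists x, M. split; [exact HM|]. split.
  - assert (P : 0 < d zero x).
    { destruct (Hpos zero x) as [P|P]; [exact P|].
      exfalso. apply Hne. symmetry. apply Hzero. auto. }
    assert (d zero x <= M).
    { apply (proj1 HM). exists 1. rewrite H1. reflexivity. }
    lra.
  - apply (proj2 HM). intros r [t ->]. left. apply Ray.
Qed.

Theorem lemma7p6 (G : Type) (zero : G) (add : G -> G -> G) (opp : G -> G)
  (smul : R -> G -> G) (op : (G -> Prop) -> Prop) (d : G -> G -> R)
  (HG : is_top_vector_group zero add opp smul op)
  (Hhaus : hausdorff op)
  (Hlb : locally_balanced zero smul op)
  (Hnz : exists x : G, x <> zero)
  (Hd : is_metric d)
  (Hdc : continuous_map (prod_open op op) R_open (fun p => d (fst p) (snd p)))
  (HnotNSS : ~ NSS zero add opp op) :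
  exists (g : nat -> G) (M : nat -> R),
    (forall n, is_lub (ray_dists zero smul d (g n)) (M n)) /\
    0 < M 0%nat /\ M 0%nat < 1 /\
    (forall n, M (S n) < M n / 4).
Proof.
  set (P := fun eps (p : G * R) => 0 < eps ->
        is_lub (ray_dists zero smul d (fst p)) (snd p) /\ 0 < snd p /\ snd p <= eps).
  assert (HP : forall eps, exists p, P eps p).
  { intro eps. destruct (Rlt_dec 0 eps) as [He|He].
    - destruct (key G zero add opp smul op d HG Hlb Hd Hdc HnotNSS eps He)
        as (h & M & A & B & C).
      exists (h, M). intros _. simpl. auto.
    - exists (zero, 0). intro; lra. }
  set (F := fun eps => proj1_sig (constructive_indefinite_description _ (HP eps))).
  assert (HF : forall eps, P eps (F eps)).
  { intro eps. unfold F. apply proj2_sig. }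
  set (e := fix e (n : nat) : R :=
              match n with O => 1/2 | S k => snd (F (e k)) / 8 end).
  assert (Hpos : forall n, 0 < e n).
  { induction n as [|n IH]; simpl.
    - lra.
    - destruct (HF _ IH) as (_ & A & _). lra. }
  exists (fun n => fst (F (e n))), (fun n => snd (F (e n))).
  split; [|split; [|split]].
  - intro n. apply (HF _ (Hpos n)).
  - apply (HF _ (Hpos 0%nat)).
  - destruct (HF _ (Hpos 0%nat)) as (_ & _ & C). change (e 0%nat) with (1/2) in C |- *. lra.
  - intro n. destruct (HF _ (Hpos (S n))) as (_ & _ & C).
    destruct (HF _ (Hpos n)) as (_ & A & _).
    change (e (S n)) with (snd (F (e n)) / 8) in C |- *. lra.
Qed.
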